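(* Let $q$ be a query program, $P$ a partial model and $\mathcal{T}$ a theory, and let $\tau(M)$ denote the execution time of $q$ on a concrete model $M$. Let $$\mathit{CL}=\max_{k\vDash \mathcal{S}_{\mathrm{IPET}}} g_{\mathrm{IPET}}(k),\qquad \mathit{DS}_P=\max_{M\in \mathit{solutions}(P',\mathcal{T}')} g_{\mathrm{witness}}(M),$$ where $P',\mathcal{T}'$ are obtained from $P,\mathcal{T}$ and $q$ by the witness-generation construction. Then $\tau(M)\le \mathit{DS}_P\le \mathit{CL}$ for all $M\in\mathit{solutions}(P,\mathcal{T})$.
   Context: Linear systems. Fix a large finite reserve $\mathcal{X}$ of integer variables. A system of linear inequalities $\mathcal{S}$ is a finite set of inequalities $\sum_j a_{ij}x_j\le y_i$ (equations are written as pairs of inequalities). A valuation $k:\mathcal{X}\to\mathbb{Z}$ is a solution of $\mathcal{S}$ ($k\vDash\mathcal{S}$) if it satisfies all of them; $\mathcal{S}_1\vDash\mathcal{S}_2$ means every solution of $\mathcal{S}_1$ is a solution of $\mathcal{S}_2$. Models. A metamodel is a signature $\Sigma$ of unary class symbols, binary relation symbols, a unary existence symbol $\varepsilon$ and a binary equality symbol $\sim$. A (scoped) partial model $P=\langle O_P,I_P,\mathcal{S}_P\rangle$ consists of a finite object set $O_P$, a 3-valued interpretation $I_P(\sigma):O_P^{\mathrm{arity}(\sigma)}\to\{0,1,\tfrac12\}$ for each $\sigma\in\Sigma$ ($\tfrac12$ = unknown), and a scope $\mathcal{S}_P$ (a system of linear inequalities). $P$ is concrete if all values are $0$ or $1$,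 $I_P(\varepsilon)(o)=1$ for all $o$, $I_P(\sim)(o_1,o_2)=1$ iff $o_1=o_2$, and $\mathcal{S}_P$ has a solution. Refinement: for $\mathit{abs}:O_Q\to O_P$, $P\succcurlyeq_{\mathit{abs}}Q$ holds if for all $\sigma$ and tuples $\bar q$, $I_P(\sigma)(\mathit{abs}(\bar q))$ is $\tfrac12$ or equals $I_Q(\sigma)(\bar q)$; every $p$ with $I_P(\varepsilon)(p)=1$ has a preimage under $\mathit{abs}$; and $\mathcal{S}_Q\vDash\mathcal{S}_P$. $P\succcurlyeq Q$ if $P\succcurlyeq_{\mathit{abs}}Q$ for some $\mathit{abs}$. For a first-order predicate $\varphi$ over $\Sigma$ with free variables $v_1,\dots,v_n$ and a concrete model $M$, $M\#\varphi$ is the number of maps $Z:\{v_1,\dots,v_n\}\to O_M$ under which $\varphi$ is true in $M$. A theory $\mathcal{T}=\langle\Phi,r\rangle$ is a finite set $\Phi$ of predicates with a map $r:\Phi\to\mathcal{X}$; a concrete $M$ is compatible with it ($M\vDash\mathcal{T}$) if $\mathcal{S}_M\vDash r(\varphi)=M\#\varphi$ for all $\varphi\in\Phi$. $\mathit{solutions}(P,\mathcal{T})$ is the set of concrete models $M$ with $P\succcurlyeq M$ and $M\vDash\mathcal{T}$. Program and IPET. $q$ is a query program generated from a graph-query search plan: structured code of nested for-loops and if-statements, where each for-loop implements an extend constraint ($C(v)$ with $v$ new, or $R(v_i,v_j)$ with $v_j$ new; it iterates over all candidate bindings of the new variable) and each if-statement implements a check constraint ($C(v_i)$, $R(v_i,v_j)$,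 $v_i=v_j$, or their negations, over bound variables). $\mathit{BB}$ is its set of basic blocks; its weighted CFG is $\langle V,E,s,t,w,\mathit{tr}\rangle$ with edges $E\subseteq V\times V$, start/end $s,t$, weights $w:E\to\mathbb{N}$, traceability $\mathit{tr}:V\to\mathit{BB}$. $f:E\to\mathcal{X}$ assigns distinct variables to edges. $\mathcal{S}_{\mathrm{IPET}}$ contains $\sum_{e=\langle s,n\rangle}f(e)=1$, $\sum_{e=\langle n,t\rangle}f(e)=1$, flow conservation at every $n\ne s,t$, $-f(e)\le0$, and possibly further low-level flow facts. $g_{\mathrm{IPET}}(k)=\sum_{e\in E}w(e)k(f(e))$. Standing assumption (IPET safety): for every execution of $q$ along CFG path $\pi$, the valuation $k_\pi(f(e))=\pi\#e$ satisfies $\mathcal{S}_{\mathrm{IPET}}$ and the execution time is at most $g_{\mathrm{IPET}}(k_\pi)$. Basic block predicates. For $bb\in\mathit{BB}$, $\psi_{bb}$ is the conjunction of the atomic predicates of all for/if statements enclosing $bb$ (extend atoms without their existential quantifier; check literals as-is); $\psi_{bb}=\mathrm{true}$ if none. If $bb$ is the header of loop $\ell$, also $\psi'_{bb}=\psi_{bb}\wedge(\text{atom of }\ell)$. $\Psi$ is the set of all these predicates. By the structure of the generated code, in the run of $q$ on a concrete $M$, executions of a non-header $bb$ correspond one-to-one to matches of $\psi_{bb}$, and executions of a loop header $bb$ to matches of $\psi_{bb}$ plus matches of $\psi'_{bb}$. For concrete $M$, $\mathcal{S}_{\mathrm{flow}}(M)$ contains for each $bb$: $\sum_{e=\langle n_1,n_2\rangle\in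 E,\mathit{tr}(n_1)=bb}f(e)=M\#\psi_{bb}+M\#\psi'_{bb}$ (loop header) or $=M\#\psi_{bb}$ (otherwise). Witness generation. Given $P=\langle O_P,I_P,\mathcal{S}_P\rangle$ and $\mathcal{T}=\langle\Phi,r\rangle$ (with the range of $f$ disjoint from the range of $r$ and from the variables of $\mathcal{S}_P$), extend $r$ to $r'$ on $\Phi\cup\Psi$ by assigning to each $\psi\in\Psi$ a fresh distinct variable (not in the range of $f$, of $r$, or in $\mathcal{S}_P$). $\mathcal{S}_{\mathrm{merge}}$ contains for each $bb$: $r'(\psi_{bb})+r'(\psi'_{bb})-\sum_{e=\langle n_1,n_2\rangle\in E,\mathit{tr}(n_1)=bb}f(e)=0$ if $bb$ is a loop header, else $r'(\psi_{bb})-\sum_{e=\langle n_1,n_2\rangle\in E,\mathit{tr}(n_1)=bb}f(e)=0$. Set $P'=\langle O_P,I_P,\mathcal{S}_P\cup\mathcal{S}_{\mathrm{IPET}}\cup\mathcal{S}_{\mathrm{merge}}\rangle$ and $\mathcal{T}'=\langle\Phi\cup\Psi,r'\rangle$. For a concrete $M$, $g_{\mathrm{witness}}(M)=\max_{k\vDash\mathcal{S}_M}g_{\mathrm{IPET}}(k)$. *)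

(* Defs.v *)
From HB Require Import structures.
From Stdlib Require List.
From mathcomp Require Import all_boot all_order all_algebra.
Set Implicit Arguments. Unset Strict Implicit. Unset Printing Implicit Defensive.
Import GRing.Theory Num.Theory.
Local Open Scope ring_scope.

(* An inequality  sum_j a_j x_j <= y  is a list of (x_j, a_j) and y.         *)
Section Linear.
Variable X : finType.

Record ineq := Ineq { lhs : seq (X * int); rhs : int }.
Definition system := seq ineq.
Definition valuation := X -> int.

Definition sat_ineq (k : valuation) (i : ineq) : Prop :=
  \sum_(p <- lhs i) p.2 * k p.1 <= rhs i.
Definition sat (S : system) (k : valuation) : Prop :=
  forall i, List.In i S -> sat_ineq k i.
Definition entails (S1 S2 : system) : Prop :=
  forall k, sat S1 k -> sat S2 k.
Definition eqn (l : seq (X * int)) (c : int) : system :=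
  [:: Ineq l c; Ineq [seq (p.1, - p.2) | p <- l] (- c)].
Definition vars_of (S : system) : seq X :=
  flatten [seq [seq p.1 | p <- lhs i] | i <- S].
End Linear.

(* Cls = unary class symbols, Rel = binary relation symbols; the existence   *)
(* symbol epsilon and equality symbol ~ are built in.                        *)
Inductive tv := TZero | TOne | THalf.
Definition is_one (v : tv) : bool := if v is TOne then true else false.

Section Models.
Variables (Cls Rel : Type).

Inductive formula :=
| FCls of Cls & nat
| FRel of Rel & nat & nat
| FExist of nat
| FEq of nat & nat
| FTrue
| FFalse
| FNot of formula
| FAnd of formula & formula
| FOr of formula & formula
| FEx of nat & formula
| FAll of nat & formula.

Fixpoint fv (phi : formula) : seq nat :=
  match phi with
  | FCls _ x => [:: x]
  | FRel _ x y => [:: x; y]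
  | FExist x => [:: x]
  | FEq x y => [:: x; y]
  | FTrue | FFalse => [::]
  | FNot f => fv f
  | FAnd f g | FOr f g => fv f ++ fv g
  | FEx x f | FAll x f => [seq y <- fv f | y != x]
  end.

Variable X : finType.

Unset Implicit Arguments.
Record pmodel := PModel {
  obj : finType;
  Icls : Cls -> obj -> tv;
  Irel : Rel -> obj -> obj -> tv;
  Iex : obj -> tv;
  Ieq : obj -> obj -> tv;
  scope : system X }.
Set Implicit Arguments.

Definition upd (T : Type) (env : nat -> option T) (x : nat) (o : T) :=
  fun y => if y == x then Some o else env y.

(* truth of a predicate in (the 0/1 part of) a model, under a partial
   assignment of its variables *)
Fixpoint eval (M : pmodel) (env : nat -> option (obj M)) (phi : formula) : bool :=
  match phi with
  | FCls c x => if env x is Some o then is_one (Icls M c o) else false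
  | FRel r x y =>
      if env x is Some o1 then if env y is Some o2 then is_one (Irel M r o1 o2)
      else false else false
  | FExist x => if env x is Some o then is_one (Iex M o) else false
  | FEq x y =>
      if env x is Some o1 then if env y is Some o2 then is_one (Ieq M o1 o2)
      else false else false
  | FTrue => true
  | FFalse => false
  | FNot f => ~~ eval env f
  | FAnd f g => eval env f && eval env g
  | FOr f g => eval env f || eval env g
  | FEx x f => [exists o : obj M, eval (upd env x o) f]
  | FAll x f => [forall o : obj M, eval (upd env x o) f]
  end.

(* M # phi : number of maps Z : fv(phi) -> O_M under which phi is true *)
Definition count (M : pmodel) (phi : formula) : nat :=
  #|[set Z : {ffun seq_sub (fv phi) -> obj M}
        | eval (fun v => omap Z (insub v)) phi]|.

Definition concrete (M : pmodel) : Prop :=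
  [/\ forall c o, Icls M c o <> THalf,
      forall r o1 o2, Irel M r o1 o2 <> THalf,
      forall o, Iex M o = TOne,
      forall o1 o2, Ieq M o1 o2 = (if o1 == o2 then TOne else TZero)
    & exists k, sat (scope M) k].

Definition refines_by (P Q : pmodel) (abs : obj Q -> obj P) : Prop :=
  (forall c q, Icls P c (abs q) = THalf \/ Icls P c (abs q) = Icls Q c q) /\
  (forall r q1 q2, Irel P r (abs q1) (abs q2) = THalf \/
                   Irel P r (abs q1) (abs q2) = Irel Q r q1 q2) /\
  (forall q, Iex P (abs q) = THalf \/ Iex P (abs q) = Iex Q q) /\
  (forall q1 q2, Ieq P (abs q1) (abs q2) = THalf \/
                 Ieq P (abs q1) (abs q2) = Ieq Q q1 q2) /\
  (forall p, Iex P p = TOne -> exists q, abs q = p) /\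
  entails (scope Q) (scope P).

Definition refines (P Q : pmodel) : Prop := exists abs, @refines_by P Q abs.

Record theory := Theory { Phi : seq formula; rmap : formula -> X }.

Definition compat (M : pmodel) (T : theory) : Prop :=
  forall phi, List.In phi (Phi T) ->
    entails (scope M) (eqn [:: (rmap T phi, 1)] (count M phi)%:Z).

Definition solutions (P : pmodel) (T : theory) (M : pmodel) : Prop :=
  [/\ concrete M, refines P M & compat M T].

Inductive constr :=
| ExtendC of Cls & nat              (* C(v), v new *)
| ExtendR of Rel & nat & nat        (* R(v_i, v_j), v_j new *)
| CheckC of bool & Cls & nat        (* C(v_i) or its negation (bool = polarity) *)
| CheckR of bool & Rel & nat & nat
| CheckEq of bool & nat & nat.

Definition lit (b : bool) (f : formula) := if b then f else FNot f.

(* atomic predicate of a for/if statement (extend atoms without quantifier) *)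
Definition atom_of (a : constr) : formula :=
  match a with
  | ExtendC c v => FCls c v
  | ExtendR r vi vj => FRel r vi vj
  | CheckC b c v => lit b (FCls c v)
  | CheckR b r vi vj => lit b (FRel r vi vj)
  | CheckEq b vi vj => lit b (FEq vi vj)
  end.

Fixpoint conj (l : seq formula) : formula :=
  match l with
  | [::] => FTrue
  | [:: a] => a
  | a :: l' => FAnd a (conj l')
  end.

Section Program.
(* A query program is described by its basic blocks BB, for each block the
   list of (constraints of the) for/if statements enclosing it, and, for a
   loop header, the (extend) constraint of its loop. *)
Variables (BB : finType) (encl : BB -> seq constr) (hdr : BB -> option constr).

Definition psi (bb : BB) : formula := conj [seq atom_of a | a <- encl bb].
Definition psi' (bb : BB) : option formula :=
  omap (fun a => FAnd (psi bb) (atom_of a)) (hdr bb).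

Definition Psi : seq formula := [seq psi bb | bb <- enum BB] ++ pmap psi' (enum BB).

Variables (V : finType) (E : {set V * V}) (s t : V) (w : V * V -> nat)
          (tr : V -> BB) (f : V * V -> X).

Definition out_of (bb : BB) (c : int) : seq (X * int) :=
  [seq (f e, c) | e <- enum E & tr e.1 == bb].

(* S_IPET, with possibly further low-level flow facts [extra] *)
Definition S_IPET (extra : system X) : system X :=
  eqn [seq (f e, 1) | e <- enum E & e.1 == s] 1
  ++ eqn [seq (f e, 1) | e <- enum E & e.2 == t] 1
  ++ flatten [seq eqn ([seq (f e, 1) | e <- enum E & e.2 == n]
                       ++ [seq (f e, -1) | e <- enum E & e.1 == n]) 0
             | n <- enum V & (n != s) && (n != t)]
  ++ [seq Ineq [:: (f e, -1)] 0 | e <- enum E]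
  ++ extra.

Definition g_IPET (k : valuation X) : int := \sum_(e in E) (w e)%:Z * k (f e).

Definition cfg_path (pi : seq (V * V)) : Prop :=
  if pi is e :: pi' then
    [/\ all (fun e => e \in E) pi, e.1 == s, (last e pi').2 == t
      & path (fun a b => a.2 == b.1) e pi']
  else False.

Definition k_pi (pi : seq (V * V)) : valuation X :=
  fun x => if [pick e in E | f e == x] is Some e then (count_mem e pi)%:Z else 0.

Definition S_flow (M : pmodel) : system X :=
  flatten [seq eqn (out_of bb 1)
             ((count M (psi bb))%:Z +
              (if psi' bb is Some p then (count M p)%:Z else 0))
          | bb <- enum BB].

Variable r' : formula -> X.

Definition S_merge : system X :=
  flatten [seq eqn ((r' (psi bb), 1)
                    :: (if psi' bb is Some p then [:: (r' p, 1)] else [::])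
                    ++ out_of bb (-1)) 0
          | bb <- enum BB].

Definition P' (extra : system X) (P : pmodel) : pmodel :=
  @PModel (obj P) (Icls P) (Irel P) (Iex P) (Ieq P) (scope P ++ S_IPET extra ++ S_merge).

Definition T' (T : theory) : theory := Theory (Phi T ++ Psi) r'.

Definition fresh_extension (T : theory) (P : pmodel) : Prop :=
  [/\ forall phi, List.In phi (Phi T) -> r' phi = rmap T phi,
      forall p, List.In p Psi -> ~ List.In p (Phi T) ->
        [/\ forall e, e \in E -> r' p <> f e,
            forall phi, List.In phi (Phi T) -> r' p <> rmap T phi
          & ~ List.In (r' p) (vars_of (scope P))]
    & forall p1 p2, List.In p1 Psi -> ~ List.In p1 (Phi T) ->
        List.In p2 Psi -> ~ List.In p2 (Phi T) -> p1 <> p2 -> r' p1 <> r' p2].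
(* the values whose maxima are CL, g_witness(M) and DS_P *)
Definition CL_set (extra : system X) : int -> Prop :=
  fun v => exists k, sat (S_IPET extra) k /\ v = g_IPET k.
Definition g_witness_set (M : pmodel) : int -> Prop :=
  fun v => exists k, sat (scope M) k /\ v = g_IPET k.
Definition DS_set (extra : system X) (P : pmodel) (T : theory) : int -> Prop :=
  fun v => exists M', solutions (P' extra P) (T' T) M' /\ g_witness_set M' v.
End Program.

End Models.

Arguments PModel {Cls Rel X} obj Icls Irel Iex Ieq scope.
Arguments obj {Cls Rel X} p.
Arguments Icls {Cls Rel X} p _ _.
Arguments Irel {Cls Rel X} p _ _ _.
Arguments Iex {Cls Rel X} p _.
Arguments Ieq {Cls Rel X} p _ _.
Arguments scope {Cls Rel X} p.

(* Maxima over (integer-valued) sets, read in Z u {-oo,+oo}:                 *)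
(*   x <= max S      iff  some s in S has x <= s                              *)
(*   max S <= max T  iff  every s in S is below some element of T             *)
Definition le_max (x : int) (S : int -> Prop) : Prop := exists2 s, S s & x <= s.
Definition max_le_max (S T : int -> Prop) : Prop := forall s, S s -> le_max s T.

(* Main.v *)
Require Import Defs.
From mathcomp Require Import all_boot all_order all_algebra.
From Stdlib Require Import Classical.
Local Open Scope ring_scope.
Import GRing.Theory Num.Theory.

Lemma In_in (T : eqType) (x : T) (s : seq T) : List.In x s <-> x \in s.
Proof.
elim: s => [|y s IH] /=; first by split=> //; rewrite in_nil.
rewrite in_cons; split.
  by case=> [->|/IH H]; [rewrite eqxx | rewrite H orbT].
by case/orP => [/eqP ->|/IH H]; [left|right].
Qed.

Lemma In_cat (T : Type) (x : T) (s1 s2 : seq T) :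
  List.In x (s1 ++ s2) <-> List.In x s1 \/ List.In x s2.
Proof.
elim: s1 => [|y s IH] /=; first by split=> [H|[[]|H]] //; right.
split.
  case=> [->|/IH[H|H]]; [by left;left| by left;right| by right].
case=> [[->|H]|H]; [by left| by right; apply/IH; left| by right; apply/IH; right].
Qed.

Lemma In_map_f (A B : Type) (F : A -> B) a s : List.In a s -> List.In (F a) (map F s).
Proof. elim: s => [|y s IH] //= [->|H]; [by left | by right; apply: IH]. Qed.

Lemma In_map_inv (A B : Type) (F : A -> B) b s :
  List.In b (map F s) -> exists a, List.In a s /\ b = F a.
Proof.
elim: s => [|y s IH] //= [<-|/IH[a [Ha ->]]]; first by exists y; split=> //; left.
by exists a; split=> //; right.
Qed.

Lemma In_pmap (A B : Type) (g : A -> option B) a b s :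
  List.In a s -> g a = Some b -> List.In b (pmap g s).
Proof.
elim: s => [|y s IH] //= [->|H] Hg; first by rewrite Hg /=; left.
case: (g y) => [z|] /=; last exact: IH.
by right; apply: IH.
Qed.

Lemma In_flatten_map (A B : Type) (F : A -> seq B) s i :
  List.In i (flatten (map F s)) -> exists a, List.In i (F a).
Proof.
elim: s => [|y s IH] //= /In_cat[H|H]; first by exists y.
exact: IH.
Qed.

Arguments In_flatten_map {A B F s i}.
Arguments In_map_inv {A B F b s}.
Arguments In_pmap {A B g a b s}.
Arguments In_map_f {A B} F {a s}.

Section Sys.
Variable X : finType.

Lemma sat_app (S1 S2 : system X) k : sat (S1 ++ S2) k <-> sat S1 k /\ sat S2 k.
Proof.
rewrite /sat; split.
  by move=> H; split=> i Hi; apply: H; apply/In_cat; [left|right].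
by case=> H1 H2 i /In_cat[]; auto.
Qed.

Lemma sat_flatten (A : Type) (F : A -> system X) s k :
  sat (flatten (map F s)) k <-> forall a, List.In a s -> sat (F a) k.
Proof.
elim: s => [|y s IH] /=; first by split=> // _ i [].
rewrite sat_app IH; split.
  by case=> H1 H2 a [<-|Ha]; auto.
by move=> H; split; [apply: H; left | move=> a Ha; apply: H; right].
Qed.

Lemma sat_eqn (l : seq (X * int)) c k :
  sat (Defs.eqn l c) k <-> \sum_(p <- l) p.2 * k p.1 = c.
Proof.
have E : \sum_(p <- [seq (p.1, - p.2) | p <- l]) p.2 * k p.1
         = - \sum_(p <- l) p.2 * k p.1.
  by rewrite big_map -sumrN; apply: eq_bigr => p _ /=; rewrite mulNr.
rewrite /sat /Defs.eqn /sat_ineq /=; split.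
  move=> H.
  have h1 := H _ (or_introl erefl).
  have h2 := H _ (or_intror (or_introl erefl)).
  rewrite /= E lerN2 in h2; rewrite /= in h1.
  by apply/eqP; rewrite Order.POrderTheory.eq_le h1 h2.
by move=> Hs i [<-|[<-|[]]] /=; rewrite ?E Hs.
Qed.

Lemma sat_eqn1 (x : X) c (k : valuation X) : sat (Defs.eqn [:: (x, 1)] c) k <-> k x = c.
Proof. by rewrite sat_eqn big_seq1 /= mul1r. Qed.

Definition pin (k : valuation X) : system X :=
  flatten [seq Defs.eqn [:: (x, 1)] (k x) | x <- enum X].

Lemma sat_pin k k' : sat (pin k) k' <-> forall x, k' x = k x.
Proof.
rewrite /pin sat_flatten; split.
  by move=> H x; apply/sat_eqn1/H/In_in; rewrite mem_enum.
by move=> H x _; apply/sat_eqn1.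
Qed.

Lemma sat_ext (S : system X) k1 k2 :
  (forall i p, List.In i S -> p \in lhs i -> k1 p.1 = k2 p.1) ->
  sat S k1 -> sat S k2.
Proof.
rewrite /sat /sat_ineq => H H1 i Hi.
have <- : \sum_(p <- lhs i) p.2 * k1 p.1 = \sum_(p <- lhs i) p.2 * k2 p.1.
  by apply: eq_big_seq => p hp; rewrite (H i p Hi hp).
exact: H1.
Qed.

Lemma vars_In (S : system X) i p :
  List.In i S -> p \in lhs i -> List.In p.1 (vars_of S).
Proof.
rewrite /vars_of; elim: S => [|j S IH] //= [<-|H] hp; apply/In_cat.
  by left; apply/In_in; apply: map_f.
by right; apply: IH.
Qed.

Lemma eqn_lhs (l : seq (X * int)) c i p :
  List.In i (Defs.eqn l c) -> p \in lhs i -> exists2 q, q \in l & q.1 = p.1.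
Proof.
case=> [<-|[<-|[]]] /=; first by move=> hp; exists p.
by case/mapP => q hq ->; exists q.
Qed.

End Sys.

Arguments sat_ext {X S k1 k2}.
Arguments pin {X}.
Arguments vars_In {X S i p}.
Arguments eqn_lhs {X l c i p}.

Fixpoint lookup {A : Type} {Y : eqType} (g : A -> Y) (l : seq A) (x : Y) : option A :=
  match l with
  | [::] => None
  | p :: l' => if g p == x then Some p else lookup g l' x
  end.

Lemma lookup_some A (Y : eqType) (g : A -> Y) l x p :
  lookup g l x = Some p -> List.In p l /\ g p = x.
Proof.
elim: l => [|y l IH] //=; case: eqP => [<- [<-]|_ /IH[H1 H2]]; split=> //; by [left|right].
Qed.

Lemma lookup_none A (Y : eqType) (g : A -> Y) l x :
  lookup g l x = None -> forall p, List.In p l -> g p <> x.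
Proof.
elim: l => [|y l IH] //=; case: eqP => // Hy /IH H p [<-|Hp] //; exact: H.
Qed.

Arguments lookup_some {A Y g l x p}.
Arguments lookup_none {A Y g l x}.

Lemma eval_scope (Cls Rel : Type) (X : finType) (o : finType)
  (ic : Cls -> o -> tv) (ir : Rel -> o -> o -> tv) (ie : o -> tv) (iq : o -> o -> tv)
  (S1 S2 : system X) (phi : formula Cls Rel) (env : nat -> option o) :
  @eval _ _ _ (PModel o ic ir ie iq S1) env phi = @eval _ _ _ (PModel o ic ir ie iq S2) env phi.
Proof.
elim: phi env => //= [g IH|g IHg h IHh|g IHg h IHh|x g IH|x g IH] env.
- by rewrite IH.
- by rewrite IHg IHh.
- by rewrite IHg IHh.
- by apply: eq_existsb => y; rewrite IH.
- by apply: eq_forallb => y; rewrite IH.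
Qed.

Lemma count_scope (Cls Rel : Type) (X : finType) (o : finType)
  (ic : Cls -> o -> tv) (ir : Rel -> o -> o -> tv) (ie : o -> tv) (iq : o -> o -> tv)
  (S1 S2 : system X) (phi : formula Cls Rel) :
  Defs.count (PModel o ic ir ie iq S1) phi = Defs.count (PModel o ic ir ie iq S2) phi.
Proof.
rewrite /Defs.count; apply: eq_card => Z; rewrite !inE; exact: eval_scope.
Qed.

Theorem proposition5p4
  (Cls Rel : Type) (X : finType)
  (* the query program q: basic blocks, enclosing statements, loop headers *)
  (BB : finType) (encl : BB -> seq (constr Cls Rel))
  (hdr : BB -> option (constr Cls Rel))
  (* its weighted CFG <V,E,s,t,w,tr>, edge variables f, further flow facts *)
  (V : finType) (E : {set V * V}) (s t : V) (w : V * V -> nat) (tr : V -> BB)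
  (f : V * V -> X) (extra : system X)
  (* the run of q on a model: CFG path taken and execution time tau *)
  (run : pmodel Cls Rel X -> seq (V * V)) (tau : pmodel Cls Rel X -> nat)
  (P : pmodel Cls Rel X) (T : theory Cls Rel X) (r' : formula Cls Rel -> X) :
  {in E &, injective f} ->
  (forall x, List.In x (vars_of extra) -> exists2 e, e \in E & f e = x) ->
  (* IPET safety *)
  (forall M, concrete M ->
     [/\ cfg_path E s t (run M),
         sat (S_IPET E s t f extra) (k_pi E f (run M))
       & (tau M)%:Z <= g_IPET E w f (k_pi E f (run M))]) ->
  (* executions of basic blocks vs. matches of their predicates *)
  (forall M, concrete M -> sat (S_flow encl hdr E tr f M) (k_pi E f (run M))) ->
  (* range of f disjoint from range of r and from the variables of S_P *)
  (forall e phi, e \in E -> List.In phi (Phi T) -> f e <> rmap T phi) ->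
  (forall e, e \in E -> ~ List.In (f e) (vars_of (scope P))) ->
  (* r' extends r with fresh distinct variables on Psi *)
  fresh_extension encl hdr E f r' T P ->
  forall M, solutions P T M ->
    le_max (tau M)%:Z (DS_set encl hdr E s t w tr f r' extra P T) /\
    max_le_max (DS_set encl hdr E s t w tr f r' extra P T)
               (CL_set E s t w f extra).
Proof.
move=> finj Hextra Hsafe Hflow HfT HfP [Hr1 Hr2 Hr3].
move=> [oM ic ir ie iq sM] [HMc [abs Habs] HMT].
set M := PModel oM ic ir ie iq sM.
have part2 : max_le_max (DS_set encl hdr E s t w tr f r' extra P T)
               (CL_set E s t w f extra).
  move=> v [M' [[_ [abs' [_ [_ [_ [_ [_ Hent]]]]]] _] [k [Hk ->]]]].
  exists (g_IPET E w f k) => //; exists k; split => //.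
  by have /sat_app [_ /sat_app [H _]] := Hent k Hk.
split => //.
have [Hc1 Hc2 Hc3 Hc4 [k0 Hk0]] := HMc.
have [Hpath HIP Htau] := Hsafe M HMc.
have HF := Hflow M HMc.
set kp := k_pi E f (run M) in HIP Htau HF.
have [_ [_ [_ [_ [_ HentP]]]]] := Habs.
have Hk0P : sat (scope P) k0 := HentP k0 Hk0.
have Hk0M : forall phi, List.In phi (Phi T) -> k0 (rmap T phi) = (Defs.count M phi)%:Z.
  by move=> phi Hphi; apply/sat_eqn1/(HMT phi Hphi).
pose k : valuation X := fun x =>
  if [exists e in E, f e == x] then kp x
  else if lookup r' (Psi encl hdr) x is Some p then (Defs.count M p)%:Z else k0 x.
have kE : forall e, e \in E -> k (f e) = kp (f e).
  move=> e He; rewrite /k.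
  have -> // : [exists e' in E, f e' == f e] by apply/existsP; exists e; rewrite He eqxx.
have knotF : forall x, (forall e, e \in E -> f e <> x) ->
    k x = if lookup r' (Psi encl hdr) x is Some p then (Defs.count M p)%:Z else k0 x.
  move=> x Hx; rewrite /k.
  have -> // : [exists e' in E, f e' == x] = false.
  by apply/existsP => -[e /andP[He /eqP]]; apply: Hx.
have kPhi : forall phi, List.In phi (Phi T) -> k (r' phi) = (Defs.count M phi)%:Z.
  move=> phi Hphi; rewrite Hr1 // knotF; last by move=> e He; apply: HfT.
  case Hl: lookup => [p|]; last exact: Hk0M.
  have [HpPsi Hrp] := lookup_some Hl.
  case: (classic (List.In p (Phi T))) => Hp.
    by rewrite -Hk0M // -Hk0M // -(Hr1 p) // Hrp.
  by have [_ H2 _] := Hr2 p HpPsi Hp; case: (H2 phi Hphi).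
have kPsi : forall phi, List.In phi (Psi encl hdr) -> k (r' phi) = (Defs.count M phi)%:Z.
  move=> phi Hphi.
  case: (classic (List.In phi (Phi T))) => Hp; first exact: kPhi.
  have [H1 H2 H3] := Hr2 phi Hphi Hp.
  rewrite knotF; last by move=> e He Hfe; apply: (H1 e He); rewrite Hfe.
  case Hl: lookup => [p|]; last by case: (lookup_none Hl _ Hphi).
  have [HpPsi Hrp] := lookup_some Hl.
  case: (classic (List.In p (Phi T))) => Hq.
    by case: (H2 p Hq); rewrite -Hrp Hr1.
  case: (classic (p = phi)) => [-> //|Hne].
  by case: (Hr3 p phi HpPsi Hq Hphi Hp Hne).
have kD : forall x, List.In x (vars_of (scope P)) -> k0 x = k x.
  move=> x Hx; rewrite knotF; last by move=> e He Hfe; apply: (HfP e He); rewrite Hfe.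
  case Hl: lookup => [p|] //.
  have [HpPsi Hrp] := lookup_some Hl.
  case: (classic (List.In p (Phi T))) => Hq.
    by rewrite -Hk0M // -Hr1 // Hrp.
  by have [_ _ H3] := Hr2 p HpPsi Hq; case: H3; rewrite Hrp.
have HkP' : sat (scope (P' encl hdr E s t tr f r' extra P)) k.
  change (sat (scope P ++ S_IPET E s t f extra ++ S_merge encl hdr E tr f r') k).
  rewrite sat_app sat_app; split; last split.
  Show.
  - apply: (sat_ext _ Hk0P) => i p Hi Hp; apply: kD; exact: vars_In Hi Hp.
  - apply: (sat_ext _ HIP) => i p Hi Hp.
    suff [e He <-] : exists2 e, e \in E & f e = p.1 by rewrite kE.
    have good : forall (P0 : pred (V * V)) (c : int) (q : X * int),
        q \in map (fun e => (f e, c)) (filter P0 (enum E)) -> exists2 e, e \in E & f e = q.1.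
      move=> P0 c q /mapP [e]; rewrite mem_filter mem_enum => /andP [_ He] ->.
      by exists e.
    move: Hi; rewrite /S_IPET.
    move=> /In_cat [Hi|/In_cat [Hi|/In_cat [Hi|/In_cat [Hi|Hi]]]].
    + by have [q /good Hq <-] := eqn_lhs Hi Hp.
    + by have [q /good Hq <-] := eqn_lhs Hi Hp.
    + have [n Hn] := In_flatten_map Hi.
      have [q] := eqn_lhs Hn Hp.
      by rewrite mem_cat => /orP [/good|/good] Hq <-.
    + have [e [He Hie]] := In_map_inv Hi.
      move: Hp; rewrite Hie inE => /eqP -> /=; exists e => //.
      by move/In_in: He; rewrite mem_enum.
    + exact/Hextra/(vars_In Hi Hp).
  - rewrite /S_merge sat_flatten => bb Hbb; apply/sat_eqn.
    have /sat_flatten /(_ bb Hbb) /sat_eqn HFb := HF.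
    have Hout : \sum_(p <- out_of E tr f bb (-1)) p.2 * k p.1
              = - \sum_(p <- out_of E tr f bb 1) p.2 * kp p.1.
      rewrite /out_of !big_map -sumrN; apply: eq_big_seq => e.
      by rewrite mem_filter mem_enum => /andP [_ He] /=; rewrite kE // mulN1r mul1r.
    have HpsiIn : List.In (psi encl bb) (Psi encl hdr).
      by apply/In_cat; left; apply: In_map_f.
    rewrite big_cons big_cat Hout HFb /= kPsi // mul1r.
    case Hp: (psi' encl hdr bb) => [p|] /=.
      have HpIn : List.In p (Psi encl hdr) by apply/In_cat; right; exact: In_pmap Hbb Hp.
      by rewrite big_seq1 /= kPsi // mul1r addrA subrr.
    by rewrite big_nil add0r addr0 subrr.
pose M' := PModel oM ic ir ie iq (pin k).
have HM' : solutions (P' encl hdr E s t tr f r' extra P) (T' encl hdr r' T) M'.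
  split.
  - split => //; exists k; exact/sat_pin.
  - exists abs; have [A1 [A2 [A3 [A4 [A5 _]]]]] := Habs.
    do 5 (split; first by []).
    move=> k' /sat_pin Hk'; apply: (sat_ext _ HkP') => i p _ _; by rewrite Hk'.
  - move=> phi Hphi k' /sat_pin Hk'; apply/sat_eqn1.
    rewrite Hk'.
    have -> : Defs.count M' phi = Defs.count M phi by apply: count_scope.
    by case/In_cat: Hphi => Hphi; [apply: kPhi | apply: kPsi].
exists (g_IPET E w f k).
  exists M'; split => //; exists k; split => //; exact/sat_pin.
have -> : g_IPET E w f k = g_IPET E w f kp.
  by apply: eq_bigr => e He; rewrite kE.
exact: Htau.
Qed.
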